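(* Let $M$ be a separable finite MDP with $p_{\mathrm{maj}},p_{\mathrm{min}}>0$ and agent rewards $\rho$. Consider the linear program (LP) in variables $\lambda\in\mathbb{R}^{S\times A}$, $c\in\mathbb{R}$: maximize $(1-\gamma)^{-1}\sum_{s\in S}\sum_{a\in A}\lambda_{s,a}R_{s,a}$ subject to $\lambda_{s,a}\ge0$ for all $s,a$; $\sum_{a}\lambda_{s',a}=(1-\gamma)D_{s'}+\gamma\sum_{s}\sum_{a}\lambda_{s,a}P_{s,a,s'}$ for all $s'\in S$; $p_z^{-1}\sum_{\tilde s\in\tilde S}\sum_{a\in A}\lambda_{(z,\tilde s),a}\rho_{(z,\tilde s),a}=c$ for all $z\in Z$. Given an optimal solution $(\lambda^*,c^* )$, define $\pi^*_{s,a}=\lambda^*_{s,a}/\sum_{a'}\lambda^*_{s,a'}$ whenever $\sum_{a'}\lambda^*_{s,a'}>0$, and let $\pi^*_{s,\cdot}$ be an arbitrary probability distribution on $A$ otherwise. Then the LP is feasible if and only if $\Pi_{\mathrm{DP}}\neq\varnothing$; and in that case the LP has an optimal solution, and for every optimal solution $(\lambda^*,c^* )$ the policy $\pi^*$ is an optimal solution of problem (P), with $R^{(\pi^* )}$ equal to the optimal value of the LP.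
   Context: A finite MDP is $M=(S,A,D,P,R,\gamma)$ where $S,A$ are finite nonempty sets, $D$ is a probability distribution on $S$, $P_{s,a,s'}\ge 0$ with $\sum_{s'}P_{s,a,s'}=1$ for all $s,a$, $R\in\mathbb{R}^{S\times A}$, and $\gamma\in(0,1)$. A policy is $\pi\in\mathbb{R}^{S\times A}$ with $\pi_{s,a}\ge0$ and $\sum_a\pi_{s,a}=1$. Let $P^{(\pi)}_{s,s'}=\sum_a\pi_{s,a}P_{s,a,s'}$. For a distribution $\mu$ on $S$ set $\mu^{(\pi,0)}=\mu$, $\mu^{(\pi,t)}_{s'}=\sum_s\mu^{(\pi,t-1)}_sP^{(\pi)}_{s,s'}$, and $\mu^{(\pi)}=(1-\gamma)\sum_{t\ge0}\gamma^t\mu^{(\pi,t)}$. Write $D^{(\pi)}$ for $\mu=D$, $\Lambda^{(\pi)}_{s,a}=D^{(\pi)}_s\pi_{s,a}$, and $R^{(\pi)}=(1-\gamma)^{-1}\sum_{s,a}\Lambda^{(\pi)}_{s,a}R_{s,a}$. Fairness setup: $S=Z\times\tilde S$ with $Z=\{\mathrm{maj},\mathrm{min}\}$ and $\tilde S$ finite nonempty; agent rewards $\rho\in\mathbb{R}^{S\times A}$. For $z\in Z$, $p_z=\sum_{\tilde s}D_{(z,\tilde s)}$, $D_z$ is the distribution $(D_z)_s=D_s\cdot\mathbb{I}[s=(z,\tilde s)\text{ for some }\tilde s]/p_z$, $D_z^{(\pi)}$ is $\mu^{(\pi)}$ for $\mu=D_z$, $(\Lambda_z^{(\pi)})_{s,a}=(D_z^{(\pi)})_s\pi_{s,a}$,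 and $\rho_z^{(\pi)}=\sum_{s,a}(\Lambda_z^{(\pi)})_{s,a}\rho_{s,a}$. A policy satisfies demographic parity if $\rho_{\mathrm{maj}}^{(\pi)}=\rho_{\mathrm{min}}^{(\pi)}$; $\Pi_{\mathrm{DP}}$ is the set of such policies. Problem (P): maximize $R^{(\pi)}$ over $\pi\in\Pi_{\mathrm{DP}}$. The MDP is separable if there is a transition kernel $\tilde P$ on $\tilde S$ (i.e. $\tilde P_{\tilde s,a,\tilde s'}\ge0$, $\sum_{\tilde s'}\tilde P_{\tilde s,a,\tilde s'}=1$) such that $P_{(z,\tilde s),a,(z',\tilde s')}=\mathbb{I}[z=z']\,\tilde P_{\tilde s,a,\tilde s'}$ for all $z,z'\in Z$, $\tilde s,\tilde s'\in\tilde S$, $a\in A$. *)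

(* Defs.v *)
From mathcomp Require Import all_boot.
From Stdlib Require Import Reals ClassicalEpsilon.
Set Implicit Arguments. Unset Strict Implicit. Unset Printing Implicit Defensive.
Open Scope R_scope.

Definition sumR (T : finType) (F : T -> R) : R := \big[Rplus/0]_(i : T) F i.

(* The group set Z = {maj, min} is encoded as bool: maj = true, min = false. *)
Definition maj : bool := true.
Definition min : bool := false.

Section MDP.
Variables (St A : finType).
Definition S := (bool * St)%type.

Definition is_distr (T : finType) (d : T -> R) : Prop :=
  (forall x, 0 <= d x) /\ sumR d = 1.

Definition is_kernel (T : finType) (P : T -> A -> T -> R) : Prop :=
  forall s a, is_distr (P s a).

Definition is_policy (T : finType) (pi : T -> A -> R) : Prop :=
  forall s, is_distr (pi s).

Definition separable (P : S -> A -> S -> R) : Prop :=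
  exists Pt : St -> A -> St -> R, is_kernel Pt /\
    forall (z z' : bool) (s s' : St) (a : A),
      P (z, s) a (z', s') = if z == z' then Pt s a s' else 0.

Variables (P : S -> A -> S -> R) (gamma : R).

Definition Ppi (pi : S -> A -> R) (s s' : S) : R := sumR (fun a => pi s a * P s a s').

Fixpoint mu_t (mu : S -> R) (pi : S -> A -> R) (t : nat) : S -> R :=
  match t with
  | O => mu
  | Datatypes.S t' => fun s' => sumR (fun s => mu_t mu pi t' s * Ppi pi s s')
  end.

Definition occ (mu : S -> R) (pi : S -> A -> R) (s : S) : R :=
  epsilon (inhabits 0)
    (fun l => infinite_sum (fun t => (1 - gamma) * gamma ^ t * mu_t mu pi t s) l).

Variables (D : S -> R) (Rw rho : S -> A -> R).

Definition Lambda (pi : S -> A -> R) (s : S) (a : A) : R := occ D pi s * pi s a.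

Definition Rpi (pi : S -> A -> R) : R :=
  / (1 - gamma) * sumR (fun s => sumR (fun a => Lambda pi s a * Rw s a)).

Definition pz (z : bool) : R := sumR (fun st : St => D (z, st)).

Definition Dz (z : bool) (s : S) : R := if s.1 == z then D s / pz z else 0.

Definition rhoz (pi : S -> A -> R) (z : bool) : R :=
  sumR (fun s => sumR (fun a => occ (Dz z) pi s * pi s a * rho s a)).

Definition demographic_parity (pi : S -> A -> R) : Prop := rhoz pi maj = rhoz pi min.

Definition in_PiDP (pi : S -> A -> R) : Prop := is_policy pi /\ demographic_parity pi.

Definition optimal_P (pi : S -> A -> R) : Prop :=
  in_PiDP pi /\ forall pi', in_PiDP pi' -> Rpi pi' <= Rpi pi.

Definition LP_obj (lam : S -> A -> R) : R :=
  / (1 - gamma) * sumR (fun s => sumR (fun a => lam s a * Rw s a)).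

Definition LP_feasible (lam : S -> A -> R) (c : R) : Prop :=
  (forall s a, 0 <= lam s a) /\
  (forall s', sumR (fun a => lam s' a) =
              (1 - gamma) * D s' + gamma * sumR (fun s => sumR (fun a => lam s a * P s a s'))) /\
  (forall z : bool,
      / pz z * sumR (fun st : St => sumR (fun a => lam (z, st) a * rho (z, st) a)) = c).

Definition LP_optimal (lam : S -> A -> R) (c : R) : Prop :=
  LP_feasible lam c /\
  forall lam' c', LP_feasible lam' c' -> LP_obj lam' <= LP_obj lam.

Definition induced_policy (lam : S -> A -> R) (pi : S -> A -> R) : Prop :=
  is_policy pi /\
  forall s, 0 < sumR (fun a => lam s a) -> forall a, pi s a = lam s a / sumR (fun a' => lam s a').

End MDP.

(* Main.v *)
Require Import Defs.
From Coquelicot Require Import Coquelicot.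
From HB Require Import structures.
From mathcomp Require Import all_boot all_order all_algebra.
From mathcomp Require Import all_classical all_reals all_analysis.
From mathcomp Require Import Rstruct Rstruct_topology.
From Stdlib Require Import Reals Lra ClassicalEpsilon.
Open Scope R_scope.
Set Implicit Arguments. Unset Strict Implicit.

Lemma sumR_ge0 (T : finType) (F : T -> R) : (forall i, 0 <= F i) -> 0 <= sumR F.
Proof. move=> H; rewrite /sumR; apply: (big_ind (fun x => 0 <= x)) => //; [lra| move=> *; lra]. Qed.

Lemma sumR_le (T : finType) (F G : T -> R) : (forall i, F i <= G i) -> sumR F <= sumR G.
Proof. move=> H; rewrite /sumR; apply: (big_ind2 (fun x y => x <= y)) => //; [lra| move=> *; lra]. Qed.

Lemma sumR_ext (T : finType) (F G : T -> R) : (forall i, F i = G i) -> sumR F = sumR G.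
Proof. move=> H; rewrite /sumR; apply: eq_bigr => i _; exact: H. Qed.

Lemma sumR_plus (T : finType) (F G : T -> R) : sumR (fun i => F i + G i) = sumR F + sumR G.
Proof. by rewrite /sumR big_split. Qed.

Lemma sumR_scal (T : finType) (c : R) (F : T -> R) : sumR (fun i => c * F i) = c * sumR F.
Proof. by rewrite /sumR big_distrr. Qed.

Lemma sumR_scalr (T : finType) (c : R) (F : T -> R) : sumR (fun i => F i * c) = sumR F * c.
Proof. by rewrite /sumR big_distrl. Qed.

Lemma sumR_swap (T U : finType) (F : T -> U -> R) :
  sumR (fun i => sumR (fun j => F i j)) = sumR (fun j => sumR (fun i => F i j)).
Proof. by rewrite /sumR exchange_big. Qed.

Lemma sumR0 (T : finType) : sumR (fun _ : T => 0) = 0.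
Proof. by rewrite /sumR big1. Qed.

Lemma sumR_abs (T : finType) (F : T -> R) : Rabs (sumR F) <= sumR (fun i => Rabs (F i)).
Proof.
rewrite /sumR; apply: (big_ind2 (fun x y => Rabs x <= y)).
- rewrite Rabs_R0; lra.
- move=> x1 x2 y1 y2 H1 H2; have := Rabs_triang x1 y1; lra.
- move=> i _; lra.
Qed.

Lemma sumR_eq0 (T : finType) (F : T -> R) : (forall i, 0 <= F i) -> sumR F = 0 -> forall i, F i = 0.
Proof.
move=> H H0 i; move: H0; rewrite /sumR (bigD1 i) //= => H0.
have : 0 <= \big[Rplus/0]_(j | j != i) F j.
  apply: (big_ind (fun x => 0 <= x)) => //; [lra| move=> *; lra].
have := H i; lra.
Qed.

Lemma sumR_single (T : finType) (F : T -> R) i : 0 <= F i -> (forall i, 0 <= F i) -> F i <= sumR F.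
Proof.
move=> _ H; rewrite /sumR (bigD1 i) //=.
have : 0 <= \big[Rplus/0]_(j | j != i) F j.
  apply: (big_ind (fun x => 0 <= x)) => //; [lra| move=> *; lra].
lra.
Qed.

Lemma sumR_pair (T U : finType) (F : T * U -> R) :
  sumR F = sumR (fun i => sumR (fun j => F (i, j))).
Proof. by rewrite /sumR pair_big; apply: eq_bigr => -[i j]. Qed.

Lemma sumR_bool (F : bool -> R) : sumR F = F true + F false.
Proof. by rewrite /sumR big_bool. Qed.

Lemma sumR_ind (T : finType) (G : T -> R) i0 :
  sumR (fun i => (if i == i0 then 1 else 0) * G i) = G i0.
Proof.
rewrite /sumR (bigD1 i0) //= eqxx big1.
- by rewrite Rmult_1_l Rplus_0_r.
- by move=> i /negbTE ->; rewrite Rmult_0_l.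
Qed.

Lemma is_series_zero : is_series (fun _ : nat => 0) 0.
Proof.
have H : Rabs (/2) < 1 by rewrite Rabs_pos_eq; lra.
have := is_series_scal 0 _ _ (is_series_geom _ H).
rewrite /scal /= /mult /= Rmult_0_l.
by apply: is_series_ext => n; rewrite Rmult_0_l.
Qed.

Lemma is_series_sumR (T : finType) (f : T -> nat -> R) (l : T -> R) :
  (forall i, is_series (f i) (l i)) ->
  is_series (fun t => sumR (fun i => f i t)) (sumR l).
Proof.
move=> H; rewrite /sumR; elim: (index_enum T) => [|x r IH].
  rewrite big_nil; apply: is_series_ext is_series_zero => n; by rewrite big_nil.
rewrite big_cons; apply: is_series_ext (is_series_plus _ _ _ _ (H x) IH) => n.
by rewrite big_cons.
Qed.

Lemma is_series_scalR (c : R) (a : nat -> R) l : is_series a l -> is_series (fun n => c * a n) (c * l).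
Proof. move=> H; exact: (is_series_scal c a l H). Qed.

Unset Implicit Arguments. Set Strict Implicit.


Section Occ.
Variables (St A : finType) (P : S St -> A -> S St -> R) (gamma : R).
Hypothesis HP : is_kernel P.
Hypothesis Hg : 0 < gamma < 1.

Lemma Ppi_ge0 pi : is_policy pi -> forall s s', 0 <= Ppi P pi s s'.
Proof.
move=> Hpi s s'; apply: sumR_ge0 => a.
have := (Hpi s).1 a; have := (HP s a).1 s'; nra.
Qed.

Lemma Ppi_sum1 pi : is_policy pi -> forall s, sumR (fun s' => Ppi P pi s s') = 1.
Proof.
move=> Hpi s; rewrite /Ppi sumR_swap -(Hpi s).2; apply: sumR_ext => a.
by rewrite sumR_scal (HP s a).2 Rmult_1_r.
Qed.

Lemma mu_t_ge0 mu pi : is_policy pi -> (forall s, 0 <= mu s) -> forall t s, 0 <= mu_t P mu pi t s.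
Proof.
move=> Hpi Hmu; elim=> [|t IH] s //=.
apply: sumR_ge0 => s0; have := IH s0; have := Ppi_ge0 _ Hpi s0 s; nra.
Qed.

Lemma mu_t_sum mu pi : is_policy pi -> forall t, sumR (mu_t P mu pi t) = sumR mu.
Proof.
move=> Hpi; elim=> [|t IH] //=.
rewrite sumR_swap -IH; apply: sumR_ext => s.
by rewrite sumR_scal Ppi_sum1 // Rmult_1_r.
Qed.

Lemma occ_series mu pi : is_policy pi -> (forall s, 0 <= mu s) -> forall s,
  is_series (fun t => (1 - gamma) * gamma ^ t * mu_t P mu pi t s) (occ P gamma mu pi s).
Proof.
move=> Hpi Hmu s.
have Hex : ex_series (fun t => (1 - gamma) * gamma ^ t * mu_t P mu pi t s).
  apply: (ex_series_le _ (fun t => ((1 - gamma) * sumR mu) * gamma ^ t)).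
    move=> t; rewrite /norm /= /abs /=.
    have H0 := mu_t_ge0 _ _ Hpi Hmu t s.
    have H1 : mu_t P mu pi t s <= sumR mu.
      rewrite -(mu_t_sum mu _ Hpi t); apply: sumR_single; [exact: H0| move=> x; exact: (mu_t_ge0 mu pi Hpi Hmu t x)].
    have H2 : 0 <= gamma ^ t by apply: pow_le; lra.
    rewrite Rabs_pos_eq; [|apply: Rmult_le_pos => //; apply: Rmult_le_pos; lra].
    have H3 : 0 <= (1 - gamma) * gamma ^ t by apply: Rmult_le_pos; lra.
    have := Rmult_le_compat_l _ _ _ H3 H1; lra.
  have H : Rabs gamma < 1 by rewrite Rabs_pos_eq; lra.
  exists ((1 - gamma) * sumR mu * / (1 - gamma)).
  have := is_series_scalR (c:=(1 - gamma) * sumR mu) (is_series_geom _ H).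
  exact.
rewrite /occ; apply/is_series_Reals; apply: epsilon_spec.
case: Hex => l Hl; exists l; exact/is_series_Reals.
Qed.

Lemma occ_ge0 mu pi : is_policy pi -> (forall s, 0 <= mu s) -> forall s, 0 <= occ P gamma mu pi s.
Proof.
move=> Hpi Hmu s; have HS := occ_series _ _ Hpi Hmu s.
rewrite -(is_series_unique _ _ HS).
have Hb : forall t, 0 <= (1 - gamma) * gamma ^ t * mu_t P mu pi t s.
  move=> t; have := mu_t_ge0 _ _ Hpi Hmu t s; have : 0 <= gamma ^ t by apply: pow_le; lra.
  have : 0 <= 1 - gamma by lra.
  move=> *; apply: Rmult_le_pos => //; apply: Rmult_le_pos => //.
have := Series_le (fun _ => 0) _ (fun n => conj (Rle_refl 0) (Hb n)) (ex_intro _ _ HS).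
by rewrite (is_series_unique _ _ is_series_zero).
Qed.

Lemma occ_flow mu pi : is_policy pi -> (forall s, 0 <= mu s) -> forall s',
  occ P gamma mu pi s' = (1 - gamma) * mu s' +
    gamma * sumR (fun s => occ P gamma mu pi s * Ppi P pi s s').
Proof.
move=> Hpi Hmu s'.
set a := fun t => (1 - gamma) * gamma ^ t * mu_t P mu pi t s'.
have Ha := occ_series _ _ Hpi Hmu s'.
have H1 : is_series (fun k => a (Datatypes.S k)) (occ P gamma mu pi s' - a O).
  apply: is_series_incr_1; rewrite /plus /=.
  by rewrite /Rminus Rplus_assoc Rplus_opp_l Rplus_0_r.
have H2 : is_series (fun k => a (Datatypes.S k))
    (gamma * sumR (fun s => occ P gamma mu pi s * Ppi P pi s s')).
  apply: (is_series_ext (fun k => gamma * sumR (fun s =>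
        (1 - gamma) * gamma ^ k * mu_t P mu pi k s * Ppi P pi s s'))).
    move=> k; rewrite /a /= -sumR_scal -sumR_scal; apply: sumR_ext => s; ring.
  apply: is_series_scalR; apply: is_series_sumR => s.
  apply: (is_series_ext (fun k => Ppi P pi s s' * ((1 - gamma) * gamma ^ k * mu_t P mu pi k s))).
    move=> k; exact: Rmult_comm.
  rewrite Rmult_comm; apply: is_series_scalR; exact: occ_series.
have := is_series_unique _ _ H1; rewrite (is_series_unique _ _ H2) /a /=.
lra.
Qed.

Lemma flow_unique mu pi (d1 d2 : S St -> R) : is_policy pi ->
  (forall s', d1 s' = (1 - gamma) * mu s' + gamma * sumR (fun s => d1 s * Ppi P pi s s')) ->
  (forall s', d2 s' = (1 - gamma) * mu s' + gamma * sumR (fun s => d2 s * Ppi P pi s s')) ->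
  forall s, d1 s = d2 s.
Proof.
move=> Hpi H1 H2.
pose e s := d1 s - d2 s.
have He : forall s', e s' = gamma * sumR (fun s => e s * Ppi P pi s s').
  move=> s'; rewrite /e H1 H2.
  have -> : sumR (fun s => (d1 s - d2 s) * Ppi P pi s s') =
     sumR (fun s => d1 s * Ppi P pi s s') + sumR (fun s => - 1 * (d2 s * Ppi P pi s s')).
    rewrite -sumR_plus; apply: sumR_ext => s; ring.
  rewrite sumR_scal; ring.
have Hb : forall s', Rabs (e s') <= gamma * sumR (fun s => Rabs (e s) * Ppi P pi s s').
  move=> s'; rewrite He Rabs_mult (Rabs_pos_eq gamma); last lra.
  apply: Rmult_le_compat_l; first lra.
  apply: Rle_trans _ _ _ (sumR_abs _) _; apply: sumR_le => s.
  rewrite Rabs_mult (Rabs_pos_eq (Ppi _ _ _ _)); [lra | exact: Ppi_ge0].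
have HE : sumR (fun s => Rabs (e s)) <= gamma * sumR (fun s => Rabs (e s)).
  apply: Rle_trans _ _ _ (sumR_le Hb) _.
  rewrite sumR_scal sumR_swap; apply: Req_le; congr (_ * _); apply: sumR_ext => s.
  by rewrite sumR_scal Ppi_sum1 // Rmult_1_r.
have H0 : 0 <= sumR (fun s => Rabs (e s)) by apply: sumR_ge0 => s; exact: Rabs_pos.
have Hz : sumR (fun s => Rabs (e s)) = 0 by nra.
move=> s; have := sumR_eq0 (fun s => Rabs_pos (e s)) Hz s.
rewrite /e => /Rabs_eq_0; lra.
Qed.

End Occ.


Section LP.
Variables (St A : finType) (D : S St -> R) (P : S St -> A -> S St -> R)
  (Rw : S St -> A -> R) (gamma : R) (rho : S St -> A -> R).
Hypothesis HD : is_distr D.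
Hypothesis HP : is_kernel P.
Hypothesis Hg : 0 < gamma < 1.
Hypothesis Hsep : separable P.
Hypothesis Hpmaj : 0 < pz D maj.
Hypothesis Hpmin : 0 < pz D min.

Lemma pz_pos z : 0 < pz D z.
Proof. by case: z. Qed.

Lemma Ppi_sep pi s s' : s.1 != s'.1 -> Ppi P pi s s' = 0.
Proof.
case: Hsep => Pt [_ HPt]; case: s => z x; case: s' => z' y /= Hz.
rewrite /Ppi -(sumR0 A); apply: sumR_ext => a.
by rewrite HPt (negbTE Hz) Rmult_0_r.
Qed.

Lemma occ_Dz pi z : is_policy pi -> forall s,
  occ P gamma (Dz D z) pi s = if s.1 == z then occ P gamma D pi s / pz D z else 0.
Proof.
move=> Hpi.
have HD0 := HD.1.
have Hp := pz_pos z.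
have HDz : forall s, 0 <= Dz D z s.
  move=> s; rewrite /Dz; case: ifP => _; last lra.
  apply: Rmult_le_pos; [exact: HD0| apply: Rlt_le; exact: Rinv_0_lt_compat].
apply: (flow_unique _ _ _ _ HP Hg (Dz D z) pi) => //.
  exact: (occ_flow _ _ _ _ HP Hg _ _ Hpi HDz).
set d := occ P gamma D pi.
have Hd := occ_flow _ _ _ _ HP Hg _ _ Hpi HD0.
move=> s'.
have Hsum : sumR (fun s => (if s.1 == z then d s / pz D z else 0) * Ppi P pi s s') =
   if s'.1 == z then sumR (fun s => d s * Ppi P pi s s') / pz D z else 0.
  case: ifP => Hs'.
    rewrite /Rdiv -sumR_scalr; apply: sumR_ext => s.
    case: ifP => Hs; first ring.
    rewrite Ppi_sep; first ring.
    by move/eqP: Hs' => ->; rewrite Hs.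
  rewrite -[RHS](sumR0 (S St)); apply: sumR_ext => s.
  case: ifP => Hs; last ring.
  rewrite Ppi_sep; first ring.
  by move/eqP: Hs => ->; rewrite eq_sym Hs'.
rewrite Hsum /Dz; case: ifP => _; last ring.
rewrite /d (Hd s') /d; field; lra.
Qed.

Lemma fair_Lambda pi z : is_policy pi ->
  rhoz P gamma D rho pi z = / pz D z *
    sumR (fun st => sumR (fun a => Lambda P gamma D pi (z, st) a * rho (z, st) a)).
Proof.
move=> Hpi.
have E : forall s a, occ P gamma (Dz D z) pi s * pi s a * rho s a =
   (if s.1 == z then / pz D z * (Lambda P gamma D pi s a * rho s a) else 0).
  move=> s a; rewrite occ_Dz // /Lambda; case: ifP => _; [rewrite /Rdiv; ring | ring].
rewrite /rhoz.
transitivity (sumR (fun s => sumR (fun a =>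
   if s.1 == z then / pz D z * (Lambda P gamma D pi s a * rho s a) else 0))).
  apply: sumR_ext => s; apply: sumR_ext => a; exact: E.
rewrite sumR_pair sumR_bool; clear E.
case: z => /=; rewrite !sumR0.
- rewrite Rplus_0_r -sumR_scal; apply: sumR_ext => st; exact: sumR_scal.
- rewrite Rplus_0_l -sumR_scal; apply: sumR_ext => st; exact: sumR_scal.
Qed.

Lemma lambda_flow pi : is_policy pi -> forall s',
  sumR (fun a => Lambda P gamma D pi s' a) =
  (1 - gamma) * D s' + gamma * sumR (fun s => sumR (fun a => Lambda P gamma D pi s a * P s a s')).
Proof.
move=> Hpi s'; rewrite /Lambda sumR_scal (Hpi s').2 Rmult_1_r.
rewrite {1}(occ_flow _ _ _ _ HP Hg _ _ Hpi HD.1 s'); congr (_ + _ * _).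
apply: sumR_ext => s; rewrite /Ppi -sumR_scal; apply: sumR_ext => a; ring.
Qed.

Lemma feasible_of_DP pi : in_PiDP P gamma D rho pi ->
  LP_feasible P gamma D rho (Lambda P gamma D pi) (rhoz P gamma D rho pi maj).
Proof.
move=> [Hpi Hdp]; split; [|split].
- move=> s a; rewrite /Lambda; apply: Rmult_le_pos.
    exact: (occ_ge0 _ _ _ _ HP Hg _ _ Hpi HD.1).
  exact: (Hpi s).1.
- exact: lambda_flow.
- case; rewrite -fair_Lambda //; by rewrite Hdp.
Qed.

Lemma policy_of_feasible lam c pi : LP_feasible P gamma D rho lam c ->
  induced_policy lam pi ->
  (forall s a, Lambda P gamma D pi s a = lam s a) /\ in_PiDP P gamma D rho pi.
Proof.
move=> [Hnn [Hflow Hfair]] [Hpi Hind].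
pose d s := sumR (fun a => lam s a).
have Hlam : forall s a, lam s a = d s * pi s a.
  move=> s a; case: (Rlt_or_le 0 (d s)) => Hd.
    rewrite (Hind s Hd a) /d; field; rewrite /d in Hd; lra.
  have Hd0 : d s = 0.
    have : 0 <= d s by apply: sumR_ge0 => a'; exact: Hnn.
    lra.
  rewrite (sumR_eq0 (Hnn s) Hd0 a) Hd0; ring.
have Hdflow : forall s', d s' = (1 - gamma) * D s' + gamma * sumR (fun s => d s * Ppi P pi s s').
  move=> s'; rewrite /d Hflow; congr (_ + _ * _).
  apply: sumR_ext => s; rewrite /Ppi -sumR_scal; apply: sumR_ext => a.
  rewrite Hlam /d; ring.
have Hocc : forall s, occ P gamma D pi s = d s.
  apply: (flow_unique _ _ _ _ HP Hg D pi) => //.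
  exact: (occ_flow _ _ _ _ HP Hg _ _ Hpi HD.1).
have HL : forall s a, Lambda P gamma D pi s a = lam s a.
  by move=> s a; rewrite /Lambda Hocc Hlam.
split=> //; split=> //.
rewrite /demographic_parity !fair_Lambda //.
have E : forall z, / pz D z * sumR (fun st => sumR (fun a =>
     Lambda P gamma D pi (z, st) a * rho (z, st) a)) = c.
  move=> z; rewrite -(Hfair z); congr (_ * _); apply: sumR_ext => st; apply: sumR_ext => a.
  by rewrite HL.
by rewrite !E.
Qed.

Lemma obj_eq lam pi : (forall s a, Lambda P gamma D pi s a = lam s a) ->
  Rpi P gamma D Rw pi = LP_obj gamma Rw lam.
Proof.
move=> HL; rewrite /Rpi /LP_obj; congr (_ * _); apply: sumR_ext => s; apply: sumR_ext => a.
by rewrite HL.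
Qed.

Lemma exists_induced (lam : S St -> A -> R) : inhabited A -> (forall s a, 0 <= lam s a) ->
  exists pi, induced_policy lam pi.
Proof.
case=> a0 Hnn.
exists (fun s a => if Rlt_dec 0 (sumR (lam s)) then lam s a / sumR (lam s)
                  else if a == a0 then 1 else 0).
split.
- move=> s; split.
    move=> a; case: Rlt_dec => H.
      apply: Rmult_le_pos; [exact: Hnn| apply: Rlt_le; exact: Rinv_0_lt_compat].
    case: ifP => _; lra.
  case: Rlt_dec => H.
    rewrite /Rdiv sumR_scalr; field; lra.
  rewrite -[RHS](sumR_ind (fun _ : A => 1) a0); apply: sumR_ext => a /=; by rewrite Rmult_1_r.
- move=> s H a; case: Rlt_dec => // H'.
Qed.

Lemma sum_lam1 lam c : LP_feasible P gamma D rho lam c ->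
  sumR (fun s => sumR (fun a => lam s a)) = 1.
Proof.
move=> [Hnn [Hflow _]].
set X := sumR (fun s => sumR (fun a => lam s a)).
have E : X = (1 - gamma) * 1 + gamma * X.
  rewrite {1}/X (sumR_ext Hflow) sumR_plus sumR_scal HD.2 sumR_scal.
  congr (_ + _ * _); rewrite sumR_swap /X; apply: sumR_ext => s.
  rewrite sumR_swap; apply: sumR_ext => a.
  by rewrite sumR_scal (HP s a).2 Rmult_1_r.
have H : (1 - gamma) * X = (1 - gamma) * 1 by lra.
apply: (Rmult_eq_reg_l (1 - gamma)) => //; lra.
Qed.

Lemma lam_le1 lam c : LP_feasible P gamma D rho lam c -> forall s a, lam s a <= 1.
Proof.
move=> H s a; have [Hnn _] := H; rewrite -(sum_lam1 _ _ H).
apply: (Rle_trans _ (sumR (fun a => lam s a))).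
  by apply: sumR_single => //; exact: Hnn.
apply: (sumR_single (F := fun s => sumR (fun a => lam s a))).
  apply: sumR_ge0 => *; exact: Hnn.
move=> s'; apply: sumR_ge0 => *; exact: Hnn.
Qed.

End LP.

Section Compact.
Local Open Scope ring_scope.
Local Open Scope R_scope.
Local Set Implicit Arguments. Local Unset Strict Implicit.

Definition lfeas (T J : finType) (C : J -> T -> R) (b : J -> R) (x : T -> R) :=
  (forall i, 0 <= x i) /\ forall j, sumR (fun i => C j i * x i) = b j.

Lemma cont_lin (T : finType) (c : T -> R) :
  continuous (fun v : 'rV[R]_#|T| => sumR (fun i => c i * v ord0 (enum_rank i))).
Proof.
rewrite /sumR; elim: (index_enum T) => [|x r IH].
  have -> : (fun v : 'rV[R]_#|T| => \big[Rplus/0]_(i <- [::]) (c i * v ord0 (enum_rank i)))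
     = fun _ => 0 by apply: funext => v; rewrite big_nil.
  exact: cst_continuous.
have -> : (fun v : 'rV[R]_#|T| => \big[Rplus/0]_(i <- x :: r) (c i * v ord0 (enum_rank i))) =
   (fun v : 'rV[R]_#|T| => c x * v ord0 (enum_rank x) +
    \big[Rplus/0]_(i <- r) (c i * v ord0 (enum_rank i))).
  by apply: funext => v; rewrite big_cons.
move=> v.
have H1 : {for v, continuous (fun v : 'rV[R]_#|T| => (c x * v ord0 (enum_rank x) : R^o))}.
  apply: (@continuousM R _ (fun=> c x) (fun v : 'rV[R]_#|T| => v ord0 (enum_rank x))).
    exact: cst_continuous.
  exact: coord_continuous.
exact: (@continuousD R R^o _ (fun v : 'rV[R]_#|T| => (c x * v ord0 (enum_rank x) : R^o))
   (fun v : 'rV[R]_#|T| => \big[Rplus/0]_(i <- r) (c i * v ord0 (enum_rank i))) v H1 (IH v)).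
Qed.

Lemma lin_max (T J : finType) (C : J -> T -> R) (b : J -> R) (w : T -> R) (M : R) :
  (exists x, lfeas C b x) -> (forall x, lfeas C b x -> forall i, x i <= M) ->
  exists x, lfeas C b x /\
    forall y, lfeas C b y -> sumR (fun i => w i * y i) <= sumR (fun i => w i * x i).
Proof.
move=> [x0 Hx0] HM.
pose xo (v : 'rV[R]_#|T|) (i : T) := v ord0 (enum_rank i).
pose vo (x : T -> R) : 'rV[R]_#|T| := \row_k x (enum_val k).
have xovo : forall x, xo (vo x) = x.
  by move=> x; apply: funext => i; rewrite /xo /vo mxE enum_rankK.
pose Fv := [set v : 'rV[R]_#|T| | lfeas C b (xo v)]%classic.
have Fne : (Fv !=set0)%classic by exists (vo x0); rewrite /Fv /= xovo.
have Fcl : closed Fv.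
  have -> : Fv = ((\bigcap_(i in [set: T]) [set v : 'rV[R]_#|T| | (0 <= xo v i)%R]) `&`
      (\bigcap_(j in [set: J]) [set v : 'rV[R]_#|T| | sumR (fun i => C j i * xo v i) = b j]))%classic.
    apply/seteqP; split => v /=.
      by move=> [H1 H2]; split => [i _ | j _] /=; [exact: H1 | exact: H2].
    by move=> [H1 H2]; split => [i | j]; [exact: (H1 i Logic.I) | exact: (H2 j Logic.I)].
  apply: closedI.
    apply: closed_bigI => i _.
    apply: (preimage_closed (f := fun v : 'rV[R]_#|T| => v ord0 (enum_rank i))
                            (D := [set x : R | 0 <= x]%classic)).
      move=> v _; exact: coord_continuous.
    have -> : [set x : R | 0 <= x]%classic = [set x : R | (Order.le 0 x)]%classic.
      by apply/seteqP; split => x /= /RleP.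
    exact: closed_ge.
  apply: closed_bigI => j _.
  apply: (preimage_closed (f := fun v : 'rV[R]_#|T| => sumR (fun i => C j i * xo v i))
                          (D := [set x : R | x = b j]%classic)).
    move=> v _; exact: cont_lin.
  exact: closed_eq.
have Fc : compact.compact Fv.
  apply: (subclosed_compact Fcl
     (B := [set v : 'rV[R]_#|T| | forall k, (`[0%R, M]%classic : set R) (v ord0 k)]%classic)).
    apply: (@rV_compact _ _ (fun=> `[0%R, M]%classic)) => k; exact: segment_compact.
  move=> v [H1 H2] k.
  have Hf : lfeas C b (xo v) by [].
  have := HM _ Hf (enum_val k); have := H1 (enum_val k).
  rewrite /xo enum_valK => Ha Hb /=.
  by rewrite in_itv /=; apply/andP; split; apply/RleP.
have [c Hc Hmax] := EVT_max_rV Fne Fc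
   (continuous_subspaceT (A:=Fv) (cont_lin (c:=w))).
exists (xo c); split.
  by move: Hc; rewrite in_setE.
move=> y Hy.
have Hin : vo y \in Fv by rewrite in_setE /Fv /= xovo.
move: (Hmax _ Hin) => /RleP.
have -> : sumR (fun i => w i * vo y ord0 (enum_rank i)) = sumR (fun i => w i * y i).
  by apply: sumR_ext => i; rewrite /vo mxE enum_rankK.
done.
Qed.

End Compact.


Section LP2.
Variables (St A : finType) (D : S St -> R) (P : S St -> A -> S St -> R)
  (Rw : S St -> A -> R) (gamma : R) (rho : S St -> A -> R).

Definition Cm (j : option (S St)) (p : S St * A) : R :=
  match j with
  | Some s' => (if p.1 == s' then 1 else 0) - gamma * P p.1 p.2 s'
  | None => (if p.1.1 then / pz D maj else - / pz D min) * rho p.1 p.2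
  end.

Definition bm (j : option (S St)) : R :=
  match j with Some s' => (1 - gamma) * D s' | None => 0 end.

Definition wm (p : S St * A) : R := / (1 - gamma) * Rw p.1 p.2.

Lemma E1 (lam : S St -> A -> R) s' :
  sumR (fun p => Cm (Some s') p * lam p.1 p.2) =
  sumR (fun a => lam s' a) - gamma * sumR (fun s => sumR (fun a => lam s a * P s a s')).
Proof.
rewrite sumR_pair /=.
transitivity (sumR (fun s => (if s == s' then 1 else 0) * sumR (fun a => lam s a)) +
   - gamma * sumR (fun s => sumR (fun a => lam s a * P s a s'))).
  rewrite -sumR_scal -sumR_plus; apply: sumR_ext => s.
  rewrite -sumR_scal -sumR_scal -sumR_plus; apply: sumR_ext => a; case: (eqVneq s s') => [->|ne]; rewrite ?eqxx ?(negbTE ne); ring.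
by rewrite sumR_ind /Rminus Ropp_mult_distr_l.
Qed.

Lemma E2 (lam : S St -> A -> R) :
  sumR (fun p => Cm None p * lam p.1 p.2) =
  / pz D maj * sumR (fun st => sumR (fun a => lam (maj, st) a * rho (maj, st) a)) -
  / pz D min * sumR (fun st => sumR (fun a => lam (min, st) a * rho (min, st) a)).
Proof.
rewrite sumR_pair sumR_pair sumR_bool /= /maj /min.
transitivity (/ pz D true * sumR (fun st => sumR (fun a => lam (true, st) a * rho (true, st) a)) +
   (- / pz D false) * sumR (fun st => sumR (fun a => lam (false, st) a * rho (false, st) a))).
  congr (_ + _); rewrite -sumR_scal; apply: sumR_ext => st; rewrite -sumR_scal;
    apply: sumR_ext => a; ring.
by rewrite /Rminus Ropp_mult_distr_l.
Qed.

Lemma feas_equiv lam :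
  (exists c, LP_feasible P gamma D rho lam c) <-> lfeas Cm bm (fun p => lam p.1 p.2).
Proof.
split.
- move=> [c [Hnn [Hflow Hfair]]]; split.
    by move=> p; exact: Hnn.
  case=> [s'|] /=.
    by rewrite E1 Hflow; ring.
  by rewrite E2 (Hfair maj) (Hfair min); ring.
- move=> [Hnn Heq].
  exists (/ pz D maj * sumR (fun st => sumR (fun a => lam (maj, st) a * rho (maj, st) a))).
  split; [|split].
  + by move=> s a; exact: (Hnn (s, a)).
  + move=> s'; have := Heq (Some s'); rewrite E1 /=; lra.
  + have := Heq None; rewrite E2 /= => H.
    by case; rewrite /maj /min in H *; lra.
Qed.

Lemma obj_pair lam : LP_obj gamma Rw lam = sumR (fun p => wm p * lam p.1 p.2).
Proof.
rewrite /LP_obj [RHS]sumR_pair -sumR_scal; apply: sumR_ext => s.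
rewrite -sumR_scal; apply: sumR_ext => a; rewrite /wm /=; ring.
Qed.

End LP2.


Theorem theorem3 (St A : finType) (D : S St -> R) (P : S St -> A -> S St -> R)
  (Rw : S St -> A -> R) (gamma : R) (rho : S St -> A -> R)
  (HSt : inhabited St) (HA : inhabited A)
  (HD : is_distr D) (HP : is_kernel P) (Hgamma : 0 < gamma < 1)
  (Hsep : separable P)
  (Hpmaj : 0 < pz D maj) (Hpmin : 0 < pz D min) :
  ((exists lam c, LP_feasible P gamma D rho lam c) <->
   (exists pi, in_PiDP P gamma D rho pi)) /\
  ((exists pi, in_PiDP P gamma D rho pi) ->
   (exists lam c, LP_optimal P gamma D Rw rho lam c) /\
   forall lam c, LP_optimal P gamma D Rw rho lam c ->
     forall pi, induced_policy lam pi ->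
       optimal_P P gamma D Rw rho pi /\
       Rpi P gamma D Rw pi = LP_obj gamma Rw lam).
Proof.
have PF := policy_of_feasible St A D P gamma rho HD HP Hgamma Hsep Hpmaj Hpmin.
have FD := feasible_of_DP St A D P gamma rho HD HP Hgamma Hsep Hpmaj Hpmin.
split.
  split.
    move=> [lam [c Hf]].
    have [pi Hind] := exists_induced St A lam HA Hf.1.
    exists pi; exact: (PF _ _ _ Hf Hind).2.
  move=> [pi Hpi]; exists (Lambda P gamma D pi), (rhoz P gamma D rho pi maj); exact: FD.
move=> [pi0 Hpi0].
have Hopt : exists lam c, LP_optimal P gamma D Rw rho lam c.
  have Hx0 : lfeas (Cm St A D P gamma rho) (bm St D gamma) (fun p => Lambda P gamma D pi0 p.1 p.2).
    apply/feas_equiv; eexists; exact: FD.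
  have Hlf : forall x, lfeas (Cm St A D P gamma rho) (bm St D gamma) x ->
      exists c, LP_feasible P gamma D rho (fun s a => x (s, a)) c.
    move=> x Hx; apply/feas_equiv.
    by rewrite (_ : (fun p : S St * A => x (p.1, p.2)) = x) //; apply: funext => -[s a].
  have Hbound : forall x, lfeas (Cm St A D P gamma rho) (bm St D gamma) x -> forall i, x i <= 1.
    move=> x Hx [s a]; have [c Hc] := Hlf x Hx.
    exact: (lam_le1 St A D P gamma rho HD HP Hgamma _ _ Hc s a).
  have [x [Hx Hxmax]] := lin_max (wm St A Rw gamma) (ex_intro _ _ Hx0) Hbound.
  have [c Hc] := Hlf x Hx.
  exists (fun s a => x (s, a)), c; split => // lam' c' Hf'.
  rewrite !obj_pair.
  have Hx' := (feas_equiv St A D P gamma rho lam').1 (ex_intro _ c' Hf').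
  have := Hxmax _ Hx'.
  move=> H; apply: (Rle_trans _ _ _ H); apply: Req_le; apply: sumR_ext => -[s a] //.
split => //.
move=> lam c [Hf Hmax] pi Hind.
have [HL Hdp] := PF _ _ _ Hf Hind.
have Hobj := obj_eq St A D P Rw gamma lam pi HL.
split; last exact: Hobj.
split => // pi' Hpi'.
rewrite Hobj (obj_eq St A D P Rw gamma (Lambda P gamma D pi') pi' (fun _ _ => erefl)).
exact: (Hmax _ _ (FD _ Hpi')).
Qed.
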